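(* Let $p,q\ge 0$ be integers and $\alpha=(\alpha_1,\dots,\alpha_p)$, $\beta=(\beta_1,\dots,\beta_q)$ with all $\alpha_i>0$, $\beta_j>0$. On the Hilbert space $\ell^2$ with orthonormal basis $\{|n\rangle\}_{n\ge 0}$, let $\hat a_f|n\rangle=\sqrt{n}\,f(n)|n-1\rangle$ (and $\hat a_f|0\rangle=0$), where $f(n)=\left(\frac{(\beta_1+n-1)\cdots(\beta_q+n-1)}{(\alpha_1+n-1)\cdots(\alpha_p+n-1)}\right)^{1/2}$. Let ${}_p\rho_q(n)=n!\,\frac{(\beta_1)_n\cdots(\beta_q)_n}{(\alpha_1)_n\cdots(\alpha_p)_n}$, ${}_pF_q(\alpha,\beta;x)=\sum_{n\ge0}\frac{x^n}{{}_p\rho_q(n)}$, and for a nonzero complex $w$ with $|w|^2$ strictly inside the disc of convergence of this series define the hypergeometric coherent state $|w;\alpha,\beta\rangle={}_pF_q(\alpha,\beta;|w|^2)^{-1/2}\sum_{n\ge0}\frac{w^n}{\sqrt{{}_p\rho_q(n)}}|n\rangle$. Let $k\ge1$ be an integer, $z\neq0$ such that $|z|^2$ lies strictly inside the disc of convergence, and for $j=0,\dots,k-1$ put ${}_p^kF_q^j(\alpha,\beta;|z|^2)=\sum_{n\ge0}\frac{|z|^{2(nk+j)}}{{}_p\rho_q(nk+j)}$. Then for each $j=0,1,\dots,k-1$, $$\frac{1}{k}\left(\frac{{}_pF_q(\alpha,\beta;|z|^2)}{{}_p^kF_q^j(\alpha,\beta;|z|^2)}\right)^{1/2}\sum_{l=0}^{k-1}e^{-2\pi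 i jl/k}\,|z e^{2\pi i l/k};\alpha,\beta\rangle={}_p^kF_q^j(\alpha,\beta;|z|^2)^{-1/2}\sum_{n\ge0}\frac{z^{nk+j}}{\sqrt{{}_p\rho_q(nk+j)}}|nk+j\rangle=:|z;\alpha,\beta;k,j\rangle,$$ and the vectors $|z;\alpha,\beta;k,j\rangle$, $j=0,\dots,k-1$, form an orthonormal basis of the eigenspace $\{\psi:\hat a_f^k\psi=z^k\psi\}$ of $\hat a_f^k$ with eigenvalue $z^k$, which is spanned by the coherent states $|ze^{2\pi i l/k};\alpha,\beta\rangle$, $l=0,\dots,k-1$.
   Context: $(a)_n=a(a+1)\cdots(a+n-1)$, $(a)_0=1$, is the Pochhammer symbol. The series ${}_pF_q$ converges for all $x$ if $p\le q$ and for $|x|<1$ if $p=q+1$. *)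

(* Defs.v *)
From Stdlib Require Import Reals List Arith Factorial.
From Coquelicot Require Import Coquelicot.
Open Scope R_scope.

Fixpoint poch (a : R) (n : nat) : R :=
  match n with
  | O => 1
  | S m => poch a m * (a + INR m)
  end.

Definition prodR (l : list R) : R := fold_right Rmult 1 l.

(* pρq(n) = n! (β1)_n...(βq)_n / ((α1)_n...(αp)_n) ; alpha, beta are the
   parameter vectors, p = length alpha, q = length beta *)
Definition rho (alpha beta : list R) (n : nat) : R :=
  INR (fact n) * prodR (map (fun b => poch b n) beta)
  / prodR (map (fun a => poch a n) alpha).

Definition ffun (alpha beta : list R) (n : nat) : R :=
  sqrt (prodR (map (fun b => b + INR n - 1) beta)
        / prodR (map (fun a => a + INR n - 1) alpha)).

Definition hypF (alpha beta : list R) (x : R) : R :=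
  Series (fun n => x ^ n / rho alpha beta n).

Definition hypFkj (alpha beta : list R) (k j : nat) (x : R) : R :=
  Series (fun n => x ^ (n * k + j) / rho alpha beta (n * k + j)).

Definition inside_disc (alpha beta : list R) (x : R) : Prop :=
  exists r : R, Rabs x < r /\ ex_series (fun n => r ^ n / rho alpha beta n).

(* Vectors of ℓ² are represented by their coordinate sequences ψ(n) = <n|ψ>. *)
Definition in_l2 (psi : nat -> C) : Prop :=
  ex_series (fun n => (Cmod (psi n)) ^ 2).

(* a_f |n> = sqrt(n) f(n) |n-1>,  a_f|0> = 0; in coordinates:
   (a_f ψ)(n) = sqrt(n+1) f(n+1) ψ(n+1) *)
Definition ann (alpha beta : list R) (psi : nat -> C) : nat -> C :=
  fun n => (RtoC (sqrt (INR (S n)) * ffun alpha beta (S n)) * psi (S n))%C.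

Fixpoint annk (alpha beta : list R) (k : nat) (psi : nat -> C) : nat -> C :=
  match k with
  | O => psi
  | S m => ann alpha beta (annk alpha beta m psi)
  end.

(* eigenspace {ψ ∈ D(a_f^k) : a_f^k ψ = μ ψ}, with D(a_f^k) the natural
   domain: ψ, a_f ψ, ..., a_f^k ψ all in ℓ² *)
Definition eigenspace (alpha beta : list R) (k : nat) (mu : C) (psi : nat -> C)
  : Prop :=
  (forall j, (j <= k)%nat -> in_l2 (annk alpha beta j psi)) /\
  (forall n, annk alpha beta k psi n = (mu * psi n)%C).

Definition inner_is (phi psi : nat -> C) (c : C) : Prop :=
  is_series (fun n => (Cconj (phi n) * psi n)%C) c.

Fixpoint csum (k : nat) (g : nat -> C) : C :=
  match k with
  | O => RtoC 0
  | S m => (csum m g + g m)%C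
  end.

Definition in_span (k : nat) (v : nat -> nat -> C) (psi : nat -> C) : Prop :=
  exists c : nat -> C, forall n, psi n = csum k (fun l => c l * v l n)%C.

Definition cis (t : R) : C := (cos t, sin t).

Definition coh (alpha beta : list R) (w : C) : nat -> C :=
  fun n => (RtoC (/ sqrt (hypF alpha beta (Cmod w ^ 2)))
            * (w ^ n) * RtoC (/ sqrt (rho alpha beta n)))%C.

Definition cat_state (alpha beta : list R) (k j : nat) (z : C) : nat -> C :=
  fun m =>
    if (Nat.ltb 0 k && Nat.eqb (m mod k) j)%bool then
      (RtoC (/ sqrt (hypFkj alpha beta k j (Cmod z ^ 2)))
       * (z ^ m) * RtoC (/ sqrt (rho alpha beta m)))%C
    else RtoC 0.

(* Main.v *)
Require Import Defs.
From Stdlib Require Import Reals List.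
From Coquelicot Require Import Coquelicot.
From Stdlib Require Import Arith Lia Lra.
Open Scope R_scope.

Lemma prodR_pos (f : R -> R) (l : list R) :
  List.Forall (fun a => 0 < a) l -> (forall a, 0 < a -> 0 < f a) -> 0 < prodR (map f l).
Proof.
  intros H Hf. induction H; simpl. lra. apply Rmult_lt_0_compat; auto.
Qed.

Lemma poch_pos a n : 0 < a -> 0 < poch a n.
Proof.
  intros Ha. induction n; simpl. lra. apply Rmult_lt_0_compat; auto.
  generalize (pos_INR n); lra.
Qed.

Lemma prodR_map_mult (f g : R -> R) l :
  prodR (map (fun b => f b * g b) l) = prodR (map f l) * prodR (map g l).
Proof. induction l; simpl. ring. rewrite IHl. ring. Qed.

Section Rho.
Variables alpha beta : list R.
Hypothesis Halpha : List.Forall (fun a => 0 < a) alpha.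
Hypothesis Hbeta : List.Forall (fun b => 0 < b) beta.

Lemma rho_pos n : 0 < rho alpha beta n.
Proof.
  unfold rho. apply Rdiv_lt_0_compat.
  apply Rmult_lt_0_compat. apply lt_0_INR, lt_O_fact.
  apply prodR_pos; auto. intros; apply poch_pos; auto.
  apply prodR_pos; auto. intros; apply poch_pos; auto.
Qed.

Lemma step_eq n :
  sqrt (INR (S n)) * ffun alpha beta (S n) = sqrt (rho alpha beta (S n)) / sqrt (rho alpha beta n).
Proof.
  assert (HB : 0 < prodR (map (fun b => b + INR n) beta)).
  { apply prodR_pos; auto. intros; generalize (pos_INR n); lra. }
  assert (HA : 0 < prodR (map (fun b => b + INR n) alpha)).
  { apply prodR_pos; auto. intros; generalize (pos_INR n); lra. }
  assert (HB0 : 0 < prodR (map (fun b => poch b n) beta)).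
  { apply prodR_pos; auto. intros; apply poch_pos; auto. }
  assert (HA0 : 0 < prodR (map (fun b => poch b n) alpha)).
  { apply prodR_pos; auto. intros; apply poch_pos; auto. }
  assert (Hf : 0 < INR (fact n)) by apply lt_0_INR, lt_O_fact.
  unfold ffun.
  replace (map (fun b => b + INR (S n) - 1) beta) with (map (fun b => b + INR n) beta)
    by (apply map_ext; intros; rewrite S_INR; ring).
  replace (map (fun b => b + INR (S n) - 1) alpha) with (map (fun b => b + INR n) alpha)
    by (apply map_ext; intros; rewrite S_INR; ring).
  rewrite <- sqrt_div_alt by apply rho_pos.
  rewrite <- sqrt_mult.
  2: apply pos_INR.
  2: apply Rlt_le, Rdiv_lt_0_compat; auto.
  f_equal. unfold rho. simpl poch.
  rewrite !prodR_map_mult. rewrite fact_simpl, mult_INR.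
  field. repeat split; lra.
Qed.

Lemma annk_closed i psi n :
  annk alpha beta i psi n =
  (RtoC (sqrt (rho alpha beta (n + i)) / sqrt (rho alpha beta n)) * psi (n + i)%nat)%C.
Proof.
  revert n. induction i; intros n; simpl.
  - rewrite Nat.add_0_r. assert (H := sqrt_lt_R0 _ (rho_pos n)).
    replace (sqrt (rho alpha beta n) / sqrt (rho alpha beta n)) with 1 by (field; lra).
    now rewrite Cmult_1_l.
  - unfold ann. rewrite IHi, step_eq.
    replace (S n + i)%nat with (n + S i)%nat by lia.
    assert (H1 := sqrt_lt_R0 _ (rho_pos n)).
    assert (H2 := sqrt_lt_R0 _ (rho_pos (S n))).
    rewrite Cmult_assoc, <- RtoC_mult. f_equal. f_equal. field. lra.
Qed.
End Rho.

Lemma RtoC_neq0 (a : R) : a <> 0 -> RtoC a <> RtoC 0.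
Proof. intros H E. apply H. now apply RtoC_inj in E. Qed.

Lemma cis_mult a b : (cis a * cis b)%C = cis (a + b).
Proof.
  unfold cis, Cmult; simpl. rewrite cos_plus, sin_plus. f_equal; ring.
Qed.

Lemma cis_0 : cis 0 = RtoC 1.
Proof. unfold cis. rewrite cos_0, sin_0. reflexivity. Qed.

Lemma cis_pow a n : (cis a ^ n)%C = cis (INR n * a).
Proof.
  induction n. simpl. rewrite Rmult_0_l, cis_0. reflexivity.
  rewrite Cpow_S, IHn, cis_mult, S_INR. f_equal. ring.
Qed.

Lemma cis_period x n : cis (x + 2 * INR n * PI) = cis x.
Proof. unfold cis. now rewrite cos_period, sin_period. Qed.

Lemma Cmod_cis a : Cmod (cis a) = 1.
Proof.
  unfold Cmod, cis. cbn [fst snd].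
  replace (cos a ^ 2 + sin a ^ 2) with 1 by (rewrite <- (sin2_cos2 a); unfold Rsqr; ring).
  apply sqrt_1.
Qed.

Lemma csum_ext k f g : (forall l, (l < k)%nat -> f l = g l) -> csum k f = csum k g.
Proof.
  induction k; simpl; intros H. reflexivity.
  rewrite IHk, H; auto.
Qed.

Lemma csum_scal k a f : (a * csum k f)%C = csum k (fun l => a * f l)%C.
Proof.
  induction k; simpl. apply Cmult_0_r.
  rewrite <- IHk. ring.
Qed.

Lemma csum_plus k f g : csum k (fun l => f l + g l)%C = (csum k f + csum k g)%C.
Proof. induction k; simpl. ring. rewrite IHk. ring. Qed.

Lemma csum_swap a b (f : nat -> nat -> C) :
  csum a (fun j => csum b (fun l => f j l)) = csum b (fun l => csum a (fun j => f j l)).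
Proof.
  induction a; simpl.
  - induction b; simpl; auto. rewrite <- IHb. ring.
  - rewrite IHa, <- csum_plus. reflexivity.
Qed.

Lemma csum_single k f j0 : (j0 < k)%nat -> (forall l, (l < k)%nat -> l <> j0 -> f l = RtoC 0) ->
  csum k f = f j0.
Proof.
  induction k; intros Hj H. lia.
  simpl. destruct (Nat.eq_dec j0 k).
  - subst. assert (csum k f = RtoC 0).
    { clear IHk Hj. assert (forall l, (l < k)%nat -> f l = RtoC 0) by (intros; apply H; lia).
      clear H. induction k; simpl; auto. rewrite IHk. rewrite H0 by lia. ring. intros; apply H0; lia. }
    rewrite H0. ring.
  - rewrite IHk by (try lia; intros; apply H; lia). rewrite (H k) by lia. ring.
Qed.

Lemma csum_one k : csum k (fun _ => RtoC 1) = RtoC (INR k).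
Proof.
  induction k; simpl csum. reflexivity. rewrite IHk, S_INR, <- RtoC_plus. reflexivity.
Qed.

Lemma csum_geom k w : (csum k (fun l => w ^ l) * (w - 1))%C = (w ^ k - 1)%C.
Proof.
  induction k; simpl csum. simpl. ring.
  rewrite Cmult_plus_distr_r, IHk, Cpow_S. ring.
Qed.

Lemma cis_neq1 t : 0 < t < 2 * PI -> cis t <> RtoC 1.
Proof.
  intros [H1 H2] E. unfold cis in E. injection E as Ec Es.
  destruct (Rlt_le_dec t PI).
  - assert (0 < sin t) by (apply sin_gt_0; lra). lra.
  - destruct (Req_dec t PI). subst. rewrite cos_PI in Ec. lra.
    assert (sin t < 0) by (apply sin_lt_0; lra). lra.
Qed.

Lemma roots_sum k N : (1 <= k)%nat ->
  csum k (fun l => cis (2 * PI * INR l * INR N / INR k)) =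
  if Nat.eqb (N mod k) 0 then RtoC (INR k) else RtoC 0.
Proof.
  intros Hk. assert (Hk' : INR k <> 0) by (apply not_0_INR; lia).
  set (s := (N mod k)%nat). set (q := (N / k)%nat).
  assert (HN : N = (s + q * k)%nat) by (unfold s, q; generalize (Nat.div_mod_eq N k); lia).
  set (w := cis (2 * PI * INR s / INR k)).
  assert (Hw : forall l, cis (2 * PI * INR l * INR N / INR k) = (w ^ l)%C).
  { intros l. unfold w. rewrite cis_pow. rewrite HN, plus_INR, mult_INR.
    replace (2 * PI * INR l * (INR s + INR q * INR k) / INR k)
      with (INR l * (2 * PI * INR s / INR k) + 2 * INR (l * q) * PI)
      by (rewrite mult_INR; field; auto).
    apply cis_period. }
  rewrite (csum_ext _ _ _ (fun l _ => Hw l)).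
  destruct (Nat.eqb_spec s 0) as [E|E].
  - unfold w. rewrite E. simpl INR. replace (2 * PI * 0 / INR k) with 0 by (field; auto).
    rewrite cis_0. rewrite (csum_ext _ _ (fun _ => RtoC 1)). apply csum_one.
    intros. clear. induction l; simpl; auto. rewrite IHl. ring.
  - assert (Hs : (0 < s < k)%nat) by (unfold s; split; [lia| apply Nat.mod_upper_bound; lia]).
    assert (Hw1 : w <> RtoC 1).
    { apply cis_neq1. assert (0 < INR s) by (apply lt_0_INR; lia).
      assert (INR s < INR k) by (apply lt_INR; lia). assert (0 < INR k) by lra.
      generalize PI_RGT_0; intros. split.
      apply Rdiv_lt_0_compat; nra.
      apply (Rmult_lt_reg_r (INR k)); auto. unfold Rdiv. rewrite Rmult_assoc, Rinv_l by lra. nra. }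
    assert (Hwk : (w ^ k)%C = RtoC 1).
    { unfold w. rewrite cis_pow. rewrite <- cis_0. 
      replace (INR k * (2 * PI * INR s / INR k)) with (0 + 2 * INR s * PI) by (field; auto).
      apply cis_period. }
    assert (G := csum_geom k w). rewrite Hwk in G.
    replace (RtoC 1 - RtoC 1)%C with (RtoC 0) in G by ring.
    assert (Hn : (w - 1)%C <> RtoC 0).
    { intros E'. apply Hw1. replace w with ((w - 1) + 1)%C by ring. rewrite E'. ring. }
    change (csum k (Cpow w)) with (csum k (fun l => w ^ l))%C.
    replace (csum k (fun l => w ^ l))%C with (csum k (fun l => w ^ l) * (w - 1) * / (w - 1))%C
      by (field; auto).
    rewrite G. ring.
Qed.

Lemma ex_series_dom (a b : nat -> R) : (forall n, 0 <= a n <= b n) -> ex_series b -> ex_series a.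
Proof.
  intros H Hb. apply (ex_series_le a b); auto.
  intros n. change (norm (a n)) with (Rabs (a n)). rewrite Rabs_pos_eq; apply H.
Qed.

Lemma sum_n_zero (b : nat -> R) t : (forall u, (u <= t)%nat -> b u = 0) -> sum_n b t = 0.
Proof.
  induction t; intros H. rewrite sum_O. apply H; lia.
  rewrite sum_Sn, IHt. rewrite H by lia. unfold plus; simpl. ring. intros; apply H; lia.
Qed.

Lemma sum_n_prefix (b : nat -> R) t : (forall u, (u < t)%nat -> b u = 0) -> sum_n b t = b t.
Proof.
  destruct t; intros H. apply sum_O. rewrite sum_Sn, sum_n_zero. unfold plus; simpl; ring.
  intros; apply H; lia.
Qed.

Lemma sum_n_run (b : nat -> R) m0 t : (forall u, (1 <= u <= t)%nat -> b (m0 + u)%nat = 0) ->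
  sum_n b (m0 + t) = sum_n b m0.
Proof.
  induction t; intros H. now rewrite Nat.add_0_r.
  rewrite Nat.add_succ_r, sum_Sn, IHt. rewrite <- Nat.add_succ_r. rewrite H by lia. unfold plus; simpl; ring.
  intros; apply H; lia.
Qed.

Lemma mul_gap q N u k : (0 < u < k)%nat -> (q * k <> N * k + u)%nat.
Proof.
  intros Hu E. destruct (le_lt_dec q N).
  - assert (q * k <= N * k)%nat by (apply Nat.mul_le_mono_r; lia). lia.
  - assert (S N * k <= q * k)%nat by (apply Nat.mul_le_mono_r; lia). simpl in *. lia.
Qed.

Lemma mod_eq_iff m k j : (j < k)%nat -> (m mod k = j <-> exists q, m = (q * k + j)%nat).
Proof.
  intros Hj. split.
  - intros E. exists (m / k)%nat. rewrite <- E. rewrite (Nat.div_mod_eq m k) at 1. lia.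
  - intros [q ->]. rewrite Nat.add_comm, Nat.Div0.mod_add. apply Nat.mod_small; auto.
Qed.

Lemma partial_ge0 (c : nat -> R) N : (forall n, 0 <= c n) -> c O <= sum_n c N.
Proof.
  intros H. induction N. rewrite sum_O; lra. rewrite sum_Sn. unfold plus; simpl. specialize (H (S N)). lra.
Qed.

Lemma series_ge0 (c : nat -> R) l : (forall n, 0 <= c n) -> is_series c l -> c O <= l.
Proof.
  intros H Hl. assert (Rbar_le (c O) l).
  { apply (is_lim_seq_le (fun _ => c O) (sum_n c)). intros; apply partial_ge0; auto.
    apply is_lim_seq_const. exact Hl. }
  exact H0.
Qed.

Section Sparse.
Variables (a : nat -> R) (k j : nat).
Hypothesis Ha : forall n, 0 <= a n.
Hypothesis Hex : ex_series a.
Hypothesis Hk : (1 <= k)%nat.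
Hypothesis Hj : (j < k)%nat.

Definition sparse (m : nat) : R := if (Nat.ltb 0 k && Nat.eqb (m mod k) j)%bool then a m else 0.

Lemma sparse_sub N : sum_n sparse (N * k + j) = sum_n (fun n => a (n * k + j)%nat) N.
Proof.
  assert (Hk0 : Nat.ltb 0 k = true) by (apply Nat.ltb_lt; lia).
  assert (Hon : forall n, sparse (n * k + j)%nat = a (n * k + j)%nat).
  { intros n. unfold sparse. rewrite Hk0. simpl.
    replace ((n * k + j) mod k)%nat with j. rewrite Nat.eqb_refl; auto.
    symmetry. apply mod_eq_iff; eauto. }
  induction N.
  - simpl. rewrite sum_O, sum_n_prefix. apply (Hon 0%nat).
    intros u Hu. unfold sparse. rewrite Hk0. simpl. rewrite Nat.mod_small by lia.
    destruct (Nat.eqb_spec u j). lia. auto.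
  - replace (S N * k + j)%nat with (S ((N * k + j) + (k - 1)))%nat by (simpl; lia).
    rewrite sum_Sn, sum_n_run, IHN, sum_Sn.
    replace (S (N * k + j + (k - 1))) with (S N * k + j)%nat by (simpl; lia).
    now rewrite Hon.
    intros u Hu. unfold sparse. rewrite Hk0. simpl.
    destruct (Nat.eqb_spec ((N * k + j + u) mod k) j) as [E|E]; auto.
    apply mod_eq_iff in E; auto. destruct E as [q Eq].
    exfalso. apply (mul_gap q N u k). lia. lia.
Qed.

Lemma sparse_series : is_series sparse (Series (fun n => a (n * k + j)%nat)) /\
   is_series (fun n => a (n * k + j)%nat) (Series (fun n => a (n * k + j)%nat)).
Proof.
  assert (Hs : ex_series sparse).
  { apply (ex_series_dom _ a); auto. intros n. unfold sparse.
    destruct (_ && _)%bool; split; auto; lra. }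
  destruct Hs as [l Hl].
  assert (Hc : is_series (fun n => a (n * k + j)%nat) l).
  { assert (is_lim_seq (sum_n (fun n => a (n * k + j)%nat)) l); [|exact H].
    apply (is_lim_seq_ext (fun N => sum_n sparse (N * k + j))).
    apply sparse_sub.
    apply (is_lim_seq_subseq (sum_n sparse) l (fun N => N * k + j)%nat). 2: exact Hl.
    intros P [N0 HP]. exists N0. intros n Hn. apply HP.
    assert (n <= n * k)%nat by (rewrite <- (Nat.mul_1_r n) at 1; apply Nat.mul_le_mono_l; lia). lia. }
  now rewrite (is_series_unique _ _ Hc).
Qed.

End Sparse.

Section Main.
Variables alpha beta : list R.
Hypothesis Halpha : List.Forall (fun a => 0 < a) alpha.
Hypothesis Hbeta : List.Forall (fun b => 0 < b) beta.
Variable k : nat.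
Hypothesis Hk : (1 <= k)%nat.
Variable z : C.
Hypothesis Hz : z <> RtoC 0.
Hypothesis Hdisc : inside_disc alpha beta (Cmod z ^ 2).

Let rh := rho alpha beta.
Let x := Cmod z ^ 2.
Let a n := x ^ n / rh n.

Lemma rh_pos n : 0 < rh n.
Proof. apply rho_pos; auto. Qed.
Lemma srh_pos n : 0 < sqrt (rh n).
Proof. apply sqrt_lt_R0, rh_pos. Qed.

Lemma x_pos : 0 < x.
Proof. unfold x. apply pow_lt. apply Cmod_gt_0. auto. Qed.

Lemma a_nonneg n : 0 <= a n.
Proof. unfold a. apply Rlt_le, Rdiv_lt_0_compat. apply pow_lt, x_pos. apply rh_pos. Qed.
Lemma a_pos n : 0 < a n.
Proof. unfold a. apply Rdiv_lt_0_compat. apply pow_lt, x_pos. apply rh_pos. Qed.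

Lemma a_ex : ex_series a.
Proof.
  destruct Hdisc as [r [Hr Hs]].
  apply (ex_series_dom a _) in Hs; [exact Hs|]. intros n. split. apply a_nonneg.
  unfold a. unfold Rdiv. apply Rmult_le_compat_r. apply Rlt_le, Rinv_0_lt_compat, rh_pos.
  apply pow_incr. generalize x_pos; intros. fold x in Hr. rewrite Rabs_pos_eq in Hr; lra.
Qed.

Lemma F_pos : 0 < hypF alpha beta x.
Proof.
  unfold hypF. change (fun n => x ^ n / rho alpha beta n) with a.
  apply (Rlt_le_trans _ (a O)). apply a_pos.
  apply series_ge0. apply a_nonneg. apply Series_correct, a_ex.
Qed.

Lemma Fj_series j : (j < k)%nat ->
  is_series (sparse a k j) (hypFkj alpha beta k j x) /\ 0 < hypFkj alpha beta k j x.
Proof.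
  intros Hj. unfold hypFkj.
  change (fun n => x ^ (n * k + j) / rho alpha beta (n * k + j)) with (fun n => a (n * k + j)%nat).
  destruct (sparse_series a k j a_nonneg a_ex Hk Hj) as [H1 H2]. split; auto.
  apply (Rlt_le_trans _ (a (0 * k + j)%nat)). apply a_pos.
  apply (series_ge0 (fun n => a (n * k + j)%nat)). intros; apply a_nonneg. auto.
Qed.

Definition Bnd (psi : nat -> C) := exists K, forall m, Cmod (psi m) <= K * (Cmod z ^ m / sqrt (rh m)).
Definition Eig (psi : nat -> C) := forall n, annk alpha beta k psi n = (z ^ k * psi n)%C.

Lemma Bnd_l2 psi : Bnd psi -> forall i, in_l2 (annk alpha beta i psi).
Proof.
  intros [K HK] i. unfold in_l2.
  apply (ex_series_dom _ (fun n => (K ^ 2 * x ^ i) * a n)).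
  2: { exact (ex_series_scal_l (K ^ 2 * x ^ i) a a_ex). }
  intros n. rewrite annk_closed by auto. fold rh.
  rewrite Cmod_mult, Cmod_R.
  assert (Hg : 0 < sqrt (rh (n + i)) / sqrt (rh n)) by (apply Rdiv_lt_0_compat; apply srh_pos).
  rewrite Rabs_pos_eq by lra.
  split. apply pow_le. apply Rmult_le_pos. lra. apply Cmod_ge_0.
  specialize (HK (n + i)%nat).
  assert (Ht : 0 < Cmod z ^ (n + i) / sqrt (rh (n + i))).
  { apply Rdiv_lt_0_compat. apply pow_lt, Cmod_gt_0; auto. apply srh_pos. }
  apply Rle_trans with ((sqrt (rh (n + i)) / sqrt (rh n) * (K * (Cmod z ^ (n + i) / sqrt (rh (n + i))))) ^ 2).
  - apply pow_incr. split. apply Rmult_le_pos. lra. apply Cmod_ge_0.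
    apply Rmult_le_compat_l. lra. auto.
  - assert (E : (Cmod z ^ (n + i)) ^ 2 = x ^ n * x ^ i).
    { unfold x. rewrite <- !pow_mult, <- pow_add. f_equal. lia. }
    unfold a. right.
    assert (H1 := srh_pos n). assert (H2 := srh_pos (n + i)).
    replace ((sqrt (rh (n + i)) / sqrt (rh n) * (K * (Cmod z ^ (n + i) / sqrt (rh (n + i))))) ^ 2)
      with (K ^ 2 * (Cmod z ^ (n + i)) ^ 2 / (sqrt (rh n)) ^ 2) by (field; lra).
    rewrite E, pow2_sqrt by (apply Rlt_le, rh_pos). field. apply Rgt_not_eq, rh_pos.
Qed.

Lemma Bnd_csum (v : nat -> nat -> C) (c : nat -> C) kk :
  (forall l, Bnd (v l)) -> Bnd (fun n => csum kk (fun l => c l * v l n)%C).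
Proof.
  intros Hv. induction kk; simpl.
  - exists 0. intros m. rewrite Cmod_0. lra.
  - destruct IHkk as [K1 H1]. destruct (Hv kk) as [K2 H2].
    exists (K1 + Cmod (c kk) * K2). intros m.
    eapply Rle_trans. apply Cmod_triangle. rewrite Cmod_mult.
    specialize (H1 m). specialize (H2 m).
    assert (0 <= Cmod (c kk)) by apply Cmod_ge_0.
    assert (Cmod (c kk) * Cmod (v kk m) <= Cmod (c kk) * (K2 * (Cmod z ^ m / sqrt (rh m))))
      by (apply Rmult_le_compat_l; auto).
    lra.
Qed.

Lemma Eig_csum (v : nat -> nat -> C) (c : nat -> C) kk :
  (forall l, Eig (v l)) -> Eig (fun n => csum kk (fun l => c l * v l n)%C).
Proof.
  intros Hv n. rewrite annk_closed by auto. rewrite csum_scal, csum_scal.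
  apply csum_ext. intros l _. specialize (Hv l n). rewrite annk_closed in Hv by auto.
  transitivity (c l * (RtoC (sqrt (rho alpha beta (n + k)) / sqrt (rho alpha beta n)) * v l (n + k)%nat))%C.
  ring. rewrite Hv. ring.
Qed.

Lemma eigen_of psi : Bnd psi -> Eig psi -> eigenspace alpha beta k (z ^ k)%C psi.
Proof. intros HB HE. split. intros; apply Bnd_l2; auto. exact HE. Qed.

Lemma Bnd_ext psi phi : (forall n, psi n = phi n) -> Bnd phi -> Bnd psi.
Proof. intros E [K HK]. exists K. intros m. rewrite E. auto. Qed.
Lemma Eig_ext psi phi : (forall n, psi n = phi n) -> Eig phi -> Eig psi.
Proof. intros E HE n. rewrite annk_closed by auto. rewrite E, E.
  specialize (HE n). rewrite annk_closed in HE by auto. auto. Qed.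

End Main.

Lemma is_series_zero : is_series (fun _ : nat => 0) 0.
Proof.
  assert (is_lim_seq (sum_n (fun _ : nat => 0)) 0); [|exact H].
  apply (is_lim_seq_ext (fun _ => 0)). intros; symmetry; apply sum_n_zero; auto.
  apply is_lim_seq_const.
Qed.

Lemma sum_n_RtoC (b : nat -> R) N : @sum_n C_AbelianGroup (fun n => RtoC (b n)) N = RtoC (sum_n b N).
Proof.
  induction N. rewrite !sum_O; auto.
  rewrite !sum_Sn, IHN. simpl. unfold plus; simpl. now rewrite RtoC_plus.
Qed.

Lemma is_series_RtoC (b : nat -> R) l : is_series b l -> @is_series C_AbsRing C_NormedModule (fun n => RtoC (b n)) (RtoC l).
Proof.
  intros H. unfold is_series in *.
  apply filterlim_locally. intros eps.
  generalize (proj1 (filterlim_locally _ _) H eps). apply filter_imp. intros N HN.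
  rewrite sum_n_RtoC. unfold ball; simpl. unfold prod_ball; simpl. split. exact HN.
  apply ball_center.
Qed.

Lemma Cpow_neq0 (w : C) n : w <> RtoC 0 -> (w ^ n)%C <> RtoC 0.
Proof.
  intros H. induction n; simpl. intros E. apply RtoC_inj in E. lra.
  apply Cmult_neq_0; auto.
Qed.

Lemma csum_scal_r k f y : (csum k f * y)%C = csum k (fun l => f l * y)%C.
Proof. rewrite Cmult_comm, csum_scal. apply csum_ext. intros; ring. Qed.

Section Main2.
Variables alpha beta : list R.
Hypothesis Halpha : List.Forall (fun a => 0 < a) alpha.
Hypothesis Hbeta : List.Forall (fun b => 0 < b) beta.
Variable k : nat.
Hypothesis Hk : (1 <= k)%nat.
Variable z : C.
Hypothesis Hz : z <> RtoC 0.
Hypothesis Hdisc : inside_disc alpha beta (Cmod z ^ 2).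

Lemma srho_pos n : 0 < sqrt (rho alpha beta n).
Proof. apply sqrt_lt_R0, rho_pos; auto. Qed.

Lemma kb : Nat.ltb 0 k = true.
Proof. apply Nat.ltb_lt; lia. Qed.

Lemma cat_Bnd j : Bnd alpha beta z (cat_state alpha beta k j z).
Proof.
  exists (Rabs (/ sqrt (hypFkj alpha beta k j (Cmod z ^ 2)))). intros m.
  assert (Hr := srho_pos m).
  assert (0 <= Cmod z ^ m / sqrt (rho alpha beta m)) by (apply Rlt_le, Rdiv_lt_0_compat; auto; apply pow_lt, Cmod_gt_0; auto).
  unfold cat_state. destruct (_ && _)%bool.
  - rewrite !Cmod_mult, !Cmod_R, Cmod_pow.
    rewrite (Rabs_pos_eq (/ sqrt (rho alpha beta m))) by (apply Rlt_le, Rinv_0_lt_compat; auto).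
    right. unfold Rdiv. ring.
  - rewrite Cmod_0. apply Rmult_le_pos; auto. apply Rabs_pos.
Qed.

Lemma cat_Eig j : Eig alpha beta k z (cat_state alpha beta k j z).
Proof.
  intros n. rewrite annk_closed by auto. unfold cat_state.
  replace ((n + k) mod k)%nat with (n mod k)%nat
    by (replace (n + k)%nat with (n + 1 * k)%nat by lia; now rewrite Nat.Div0.mod_add).
  destruct (_ && _)%bool.
  - assert (H1 := srho_pos n). assert (H2 := srho_pos (n + k)).
    rewrite Cpow_add_r.
    rewrite RtoC_div by lra. rewrite (RtoC_inv (sqrt (rho alpha beta n))), (RtoC_inv (sqrt (rho alpha beta (n + k)))) by lra.
    field. split; apply RtoC_neq0; lra.
  - ring.
Qed.

Lemma Cmod_w t : Cmod (z * cis t) = Cmod z.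
Proof. rewrite Cmod_mult, Cmod_cis. ring. Qed.

Lemma w_pow l : ((z * cis (2 * PI * INR l / INR k)) ^ k)%C = (z ^ k)%C.
Proof.
  rewrite Cpow_mult_l, cis_pow.
  assert (INR k <> 0) by (apply not_0_INR; lia).
  replace (INR k * (2 * PI * INR l / INR k)) with (0 + 2 * INR l * PI) by (field; auto).
  rewrite cis_period, cis_0. ring.
Qed.

Lemma coh_Bnd l : Bnd alpha beta z (coh alpha beta (z * cis (2 * PI * INR l / INR k))).
Proof.
  exists (Rabs (/ sqrt (hypF alpha beta (Cmod z ^ 2)))). intros m.
  assert (Hr := srho_pos m).
  unfold coh. rewrite Cmod_w.
  rewrite !Cmod_mult, !Cmod_R, Cmod_pow, Cmod_w.
  rewrite (Rabs_pos_eq (/ sqrt (rho alpha beta m))) by (apply Rlt_le, Rinv_0_lt_compat; auto).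
  right. unfold Rdiv. ring.
Qed.

Lemma coh_Eig l : Eig alpha beta k z (coh alpha beta (z * cis (2 * PI * INR l / INR k))).
Proof.
  intros n. rewrite annk_closed by auto. unfold coh.
  assert (H1 := srho_pos n). assert (H2 := srho_pos (n + k)).
  rewrite Cpow_add_r, w_pow.
  rewrite RtoC_div by lra. rewrite (RtoC_inv (sqrt (rho alpha beta n))), (RtoC_inv (sqrt (rho alpha beta (n + k)))) by lra.
  field. split; apply RtoC_neq0; lra.
Qed.

Lemma part2 j : eigenspace alpha beta k (z ^ k)%C (cat_state alpha beta k j z).
Proof. apply eigen_of; auto. apply cat_Bnd. apply cat_Eig. Qed.

Lemma span_eigen (v : nat -> nat -> C) psi :
  (forall l, Bnd alpha beta z (v l)) -> (forall l, Eig alpha beta k z (v l)) ->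
  in_span k v psi -> eigenspace alpha beta k (z ^ k)%C psi.
Proof.
  intros HB HE [c Hc]. apply eigen_of; auto.
  eapply Bnd_ext. exact Hc. apply Bnd_csum; auto.
  apply (Eig_ext alpha beta Halpha Hbeta k z _ _ Hc). apply Eig_csum; auto.
Qed.

End Main2.

Section Main3.
Variables alpha beta : list R.
Hypothesis Halpha : List.Forall (fun a => 0 < a) alpha.
Hypothesis Hbeta : List.Forall (fun b => 0 < b) beta.
Variable k : nat.
Hypothesis Hk : (1 <= k)%nat.
Variable z : C.
Hypothesis Hz : z <> RtoC 0.
Hypothesis Hdisc : inside_disc alpha beta (Cmod z ^ 2).

Lemma mod_shift m j : (j < k)%nat ->
  Nat.eqb ((m + (k - j)) mod k) 0 = Nat.eqb (m mod k) j.
Proof.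
  intros Hj. destruct (Nat.eqb_spec (m mod k) j) as [E|E].
  - apply mod_eq_iff in E; auto. destruct E as [q ->].
    replace (q * k + j + (k - j))%nat with (0 + S q * k)%nat by (simpl; lia).
    rewrite Nat.Div0.mod_add, Nat.mod_small by lia. reflexivity.
  - apply Nat.eqb_neq. intros E'. apply E.
    apply (mod_eq_iff _ k 0) in E'; [|lia]. destruct E' as [t Et].
    destruct t. simpl in Et. lia.
    apply mod_eq_iff; auto. exists t. simpl in Et. lia.
Qed.

Lemma part1 j : (j < k)%nat -> forall m,
  csum k (fun l =>
    RtoC (/ INR k * sqrt (hypF alpha beta (Cmod z ^ 2) / hypFkj alpha beta k j (Cmod z ^ 2)))
    * cis (- (2 * PI * INR j * INR l / INR k))
    * coh alpha beta (z * cis (2 * PI * INR l / INR k)) m)%C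
  = cat_state alpha beta k j z m.
Proof.
  intros Hj m.
  set (F := hypF alpha beta (Cmod z ^ 2)).
  set (Fj := hypFkj alpha beta k j (Cmod z ^ 2)).
  set (N := (m + (k - j))%nat).
  assert (HkR : INR k <> 0) by (apply not_0_INR; lia).
  set (A := / INR k * sqrt (F / Fj)).
  set (B := / sqrt F). set (Cc := / sqrt (rho alpha beta m)).
  rewrite (csum_ext _ _ (fun l => RtoC A * RtoC B * RtoC Cc * z ^ m * cis (2 * PI * INR l * INR N / INR k))%C).
  2: { intros l _. unfold coh. rewrite Cmod_w. fold F. fold B. fold Cc.
       rewrite Cpow_mult_l, cis_pow.
       replace (cis (2 * PI * INR l * INR N / INR k)) with
         (cis (- (2 * PI * INR j * INR l / INR k)) * cis (INR m * (2 * PI * INR l / INR k)))%C.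
       ring.
       rewrite cis_mult. rewrite <- (cis_period _ l). f_equal.
       unfold N. rewrite plus_INR, minus_INR by lia. field. auto. }
  rewrite <- csum_scal. rewrite roots_sum by auto.
  unfold N. rewrite mod_shift by auto.
  unfold cat_state. rewrite kb by auto. simpl andb.
  destruct (Nat.eqb (m mod k) j).
  - destruct (Fj_series alpha beta Halpha Hbeta k Hk z Hz Hdisc j Hj) as [_ HFj]. fold Fj in HFj.
    assert (HF := F_pos alpha beta Halpha Hbeta z Hz Hdisc). fold F in HF.
    assert (H1 := sqrt_lt_R0 _ HF). assert (H2 := sqrt_lt_R0 _ HFj).
    assert (E : A * B * Cc * INR k = / sqrt Fj * Cc).
    { unfold A, B. rewrite sqrt_div_alt by auto. field. repeat split; lra. }
    transitivity (RtoC (A * B * Cc * INR k) * z ^ m)%C.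
    rewrite !RtoC_mult. ring.
    rewrite E, RtoC_mult. fold Cc. fold Fj. ring.
  - ring.
Qed.

Lemma part3 i j : (i < k)%nat -> (j < k)%nat ->
  inner_is (cat_state alpha beta k i z) (cat_state alpha beta k j z)
    (if Nat.eqb i j then RtoC 1 else RtoC 0).
Proof.
  intros Hi Hj. unfold inner_is.
  destruct (Nat.eqb_spec i j) as [<-|Hne].
  - destruct (Fj_series alpha beta Halpha Hbeta k Hk z Hz Hdisc i Hi) as [HS HFj].
    set (Fj := hypFkj alpha beta k i (Cmod z ^ 2)) in *.
    set (a := fun n => (Cmod z ^ 2) ^ n / rho alpha beta n) in *.
    apply (is_series_ext (fun n => RtoC (sparse a k i n * / Fj))).
    2: { replace (RtoC 1) with (RtoC (Fj * / Fj)) by (f_equal; field; lra).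
         apply is_series_RtoC. apply is_series_scal_r. exact HS. }
    intros n. unfold sparse, cat_state. destruct (_ && _)%bool.
    + rewrite Cmult_comm, <- Cmod2_conj. f_equal.
      rewrite !Cmod_mult, !Cmod_R, Cmod_pow. unfold a.
      assert (H1 := srho_pos alpha beta Halpha Hbeta n).
      assert (H2 := sqrt_lt_R0 _ HFj).
      rewrite !Rabs_pos_eq by (apply Rlt_le, Rinv_0_lt_compat; auto).
      fold Fj. set (u := sqrt Fj) in *. set (v := sqrt (rho alpha beta n)) in *.
      assert (Hu : u * u = Fj) by (apply sqrt_sqrt; lra).
      assert (Hv : v * v = rho alpha beta n) by (apply sqrt_sqrt, Rlt_le, rho_pos; auto).
      rewrite <- Hu, <- Hv. rewrite <- pow_mult, (Nat.mul_comm 2 n), pow_mult.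
      field. lra.
    + rewrite Rmult_0_l, Cmult_0_r. reflexivity.
  - apply (is_series_ext (fun n => RtoC 0)).
    2: { apply is_series_RtoC, is_series_zero. }
    intros n. unfold cat_state. rewrite kb by auto. simpl andb.
    assert (Hc0 : Cconj (RtoC 0) = RtoC 0) by (unfold Cconj, RtoC; simpl; f_equal; ring).
    destruct (Nat.eqb_spec (n mod k) i); destruct (Nat.eqb_spec (n mod k) j).
    lia. all: rewrite ?Hc0, ?Cmult_0_r, ?Cmult_0_l; reflexivity.
Qed.

Lemma psi_shift psi : Eig alpha beta k z psi -> forall s q,
  psi (s + q * k)%nat = (RtoC (sqrt (rho alpha beta s) / sqrt (rho alpha beta (s + q * k))) * z ^ (q * k) * psi s)%C.
Proof.
  intros HE s q. induction q.
  - simpl. rewrite Nat.add_0_r. assert (H := srho_pos alpha beta Halpha Hbeta s).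
    replace (sqrt (rho alpha beta s) / sqrt (rho alpha beta s)) with 1 by (field; lra). ring.
  - set (n := (s + q * k)%nat) in *.
    replace (s + S q * k)%nat with (n + k)%nat by (unfold n; simpl; lia).
    specialize (HE n). rewrite annk_closed in HE by auto.
    assert (H1 := srho_pos alpha beta Halpha Hbeta n).
    assert (H2 := srho_pos alpha beta Halpha Hbeta (n + k)).
    assert (H3 := srho_pos alpha beta Halpha Hbeta s).
    rewrite RtoC_div in HE by lra. rewrite RtoC_div in * by lra.
    assert (Hu := RtoC_neq0 _ (Rgt_not_eq _ _ H1)).
    assert (Hv := RtoC_neq0 _ (Rgt_not_eq _ _ H2)).
    transitivity (/ (RtoC (sqrt (rho alpha beta (n + k))) / RtoC (sqrt (rho alpha beta n))) *
      (RtoC (sqrt (rho alpha beta (n + k))) / RtoC (sqrt (rho alpha beta n)) * psi (n + k)%nat))%C.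
    field. auto.
    rewrite HE, IHq. replace (S q * k)%nat with (k + q * k)%nat by (simpl; lia).
    rewrite Cpow_add_r. field. auto.
Qed.

Lemma part4 psi : eigenspace alpha beta k (z ^ k)%C psi -> in_span k (fun j => cat_state alpha beta k j z) psi.
Proof.
  intros [_ HE].
  exists (fun j => psi j * RtoC (sqrt (hypFkj alpha beta k j (Cmod z ^ 2)) * sqrt (rho alpha beta j)) / z ^ j)%C.
  intros m. set (s := (m mod k)%nat). assert (Hs : (s < k)%nat) by (apply Nat.mod_upper_bound; lia).
  rewrite (csum_single _ _ s Hs).
  2: { intros l Hl Hne. unfold cat_state. rewrite kb by auto. simpl andb.
       destruct (Nat.eqb_spec (m mod k) l). fold s in e. lia. ring. }
  unfold cat_state. rewrite kb by auto. simpl andb. fold s. rewrite Nat.eqb_refl.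
  assert (Hm : m = (s + (m / k) * k)%nat) by (unfold s; generalize (Nat.div_mod_eq m k); lia).
  set (q := (m / k)%nat) in Hm.
  destruct (Fj_series alpha beta Halpha Hbeta k Hk z Hz Hdisc s Hs) as [_ HFj].
  set (Fj := hypFkj alpha beta k s (Cmod z ^ 2)) in *.
  assert (H1 := sqrt_lt_R0 _ HFj).
  assert (H2 := srho_pos alpha beta Halpha Hbeta m).
  assert (H3 := srho_pos alpha beta Halpha Hbeta s).
  rewrite Hm at 1. rewrite (psi_shift psi HE s q). rewrite <- Hm.
  replace (z ^ m)%C with (z ^ s * z ^ (q * k))%C by (rewrite <- Cpow_add_r; congruence).
  rewrite RtoC_div, RtoC_mult, !RtoC_inv by lra.
  assert (Hzs := Cpow_neq0 z s Hz).
  field. repeat split; auto; apply RtoC_neq0; lra.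
Qed.

Lemma part5 psi : eigenspace alpha beta k (z ^ k)%C psi ->
  in_span k (fun l => coh alpha beta (z * cis (2 * PI * INR l / INR k))) psi.
Proof.
  intros H. destruct (part4 psi H) as [c Hc].
  set (d := fun j l => (RtoC (/ INR k * sqrt (hypF alpha beta (Cmod z ^ 2) / hypFkj alpha beta k j (Cmod z ^ 2)))
    * cis (- (2 * PI * INR j * INR l / INR k)))%C).
  exists (fun l => csum k (fun j => c j * d j l))%C.
  intros n. rewrite Hc.
  rewrite (csum_ext _ _ (fun j => csum k (fun l => c j * d j l * coh alpha beta (z * cis (2 * PI * INR l / INR k)) n))%C).
  rewrite csum_swap. apply csum_ext. intros l _. rewrite csum_scal_r. reflexivity.
  intros j Hj. rewrite <- (part1 j Hj n). rewrite csum_scal. apply csum_ext. intros l _. unfold d. ring.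
Qed.

End Main3.

Theorem proposition2 (alpha beta : list R)
  (Halpha : List.Forall (fun a => 0 < a) alpha)
  (Hbeta : List.Forall (fun b => 0 < b) beta)
  (k : nat) (Hk : (1 <= k)%nat) (z : C) (Hz : z <> RtoC 0)
  (Hdisc : inside_disc alpha beta (Cmod z ^ 2)) :
  (forall j : nat, (j < k)%nat ->
     forall m : nat,
       csum k (fun l =>
         RtoC (/ INR k * sqrt (hypF alpha beta (Cmod z ^ 2)
                               / hypFkj alpha beta k j (Cmod z ^ 2)))
         * cis (- (2 * PI * INR j * INR l / INR k))
         * coh alpha beta (z * cis (2 * PI * INR l / INR k)) m)%C
       = cat_state alpha beta k j z m) /\
  (forall j : nat, (j < k)%nat ->
     eigenspace alpha beta k (z ^ k)%C (cat_state alpha beta k j z)) /\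
  (forall i j : nat, (i < k)%nat -> (j < k)%nat ->
     inner_is (cat_state alpha beta k i z) (cat_state alpha beta k j z)
       (if Nat.eqb i j then RtoC 1 else RtoC 0)) /\
  (forall psi : nat -> C,
     eigenspace alpha beta k (z ^ k)%C psi <->
     in_span k (fun j => cat_state alpha beta k j z) psi) /\
  (forall psi : nat -> C,
     eigenspace alpha beta k (z ^ k)%C psi <->
     in_span k (fun l => coh alpha beta (z * cis (2 * PI * INR l / INR k))) psi).
Proof.
  split. { intros j Hj m. apply part1; auto. }
  split. { intros j Hj. apply part2; auto. }
  split. { intros i j Hi Hj. apply part3; auto. }
  split.
  - intros psi. split. apply part4; auto.
    apply span_eigen; auto. intros l; apply cat_Bnd; auto. intros l; apply cat_Eig; auto.
  - intros psi. split. apply part5; auto.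
    apply span_eigen; auto. intros l; apply coh_Bnd; auto. intros l; apply coh_Eig; auto.
Qed.
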